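(* Let $(X,\mu)$ and $(Y,\nu)$ be measure spaces with positive measures $\mu,\nu$, and let $\mathcal F\subseteq L^1(X,\mu)\times L^1(Y,\nu)$ be a family of pairs of real-valued functions. Assume there exist real numbers $p,q>1$ and $a,b,c>0$ such that for every $(f,g)\in\mathcal F$: (i) $\|g\|_{L^\infty(Y,\nu)}\le a\|f\|_{L^1(X,\mu)}$; (ii) $\|g\|_{L^q(Y,\nu)}\le b\|f\|_{L^p(X,\mu)}$; (iii) $\|f\|_{L^p(X,\mu)}\le c\|g\|_{L^q(Y,\nu)}$; (iv) $\int_X f\,d\mu\le 0$ and $\int_Y g\,d\nu\le 0$. Then for every $(f,g)\in\mathcal F$ with $(f,g)\neq(0,0)$, $$\mu(\{x\in X: f(x)<0\})^{1/p'}\,\nu(\{y\in Y: g(y)<0\})^{1/q}\ \ge\ a^{-1}b^{-q'/q}(2c)^{-q'},$$ where $p'=p/(p-1)$ and $q'=q/(q-1)$. *)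

(* Defs.v *)
From HB Require Import structures.
From mathcomp Require Import all_boot all_order all_algebra.
From mathcomp Require Import all_classical all_reals all_analysis.

(* Main.v *)
Require Import Defs.
From HB Require Import structures.
From mathcomp Require Import all_boot all_order all_algebra.
From mathcomp Require Import all_classical all_reals all_analysis.
From mathcomp Require Import measurable_realfun ess_sup_inf.
From mathcomp Require Import lra ring.
Import Order.TTheory GRing.Theory Num.Theory.
Unset Implicit Arguments.
Local Open Scope classical_set_scope.
Local Open Scope ring_scope.

Set Implicit Arguments.
Section helpers.
Context d (T : measurableType d) (R : realType) (mu : {measure set T -> \bar R}).

Lemma mset_lt0 (h : T -> R) : measurable_fun setT h -> measurable [set x | h x < 0].
Proof.
move=> mh.
have mh' : measurable_fun setT (fun x => (h x)%:E : \bar R) by apply/measurable_EFinP.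
have m0 : measurable_fun setT (fun _ : T => 0%E : \bar R) by exact: measurable_cst.
have := measurable_lte measurableT mh' m0.
by rewrite setTI; under eq_set do rewrite lte_fin.
Qed.

Lemma negpart_int (h : T -> R) : mu.-integrable setT (EFin \o h) ->
  mu.-integrable setT (fun x => (`|h x| * \1_[set x | h x < 0] x)%:E).
Proof.
move=> ih.
have mh : measurable_fun setT h by apply/measurable_EFinP; exact: measurable_int ih.
have ia := integrable_abse ih.
apply: (le_integrable measurableT _ _ ia) => //=.
- apply/measurable_EFinP; apply: measurable_funM; first exact: measurableT_comp.
  exact/measurable_indic/mset_lt0.
- move=> x _ /=; rewrite lee_fin normrM !normr_id.
  rewrite -[leRHS]mulr1 ler_wpM2l// indicE; case: (_ \in _) => //=; rewrite ?normr1 ?normr0//.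
Qed.

Lemma abs_le_negpart (h : T -> R) : mu.-integrable setT (EFin \o h) ->
  (\int[mu]_x (h x)%:E <= 0)%E ->
  (\int[mu]_x (`|h x|)%:E <= 2%:E * \int[mu]_x (`|h x| * \1_[set x | h x < 0] x)%:E)%E.
Proof.
move=> ih h0.
have ineg := negpart_int ih.
have -> : (fun x => (`|h x|)%:E) = (fun x => (h x)%:E + 2%:E * (`|h x| * \1_[set x | h x < 0] x)%:E)%E.
  apply/funext => x; rewrite -EFinM -EFinD; congr EFin.
  rewrite indicE; case: (ltrP (h x) 0) => hx.
    by rewrite mem_set //= mulr1 ltr0_norm //; lra.
  rewrite memNset /=; last by rewrite ltNge hx.
  by rewrite mulr0 mulr0 addr0 ger0_norm.
rewrite integralD //; last exact: integrableZl.
rewrite integralZl //.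
by rewrite -[leRHS]add0e; exact: leeD2r.
Qed.

Lemma ae_null (P : T -> Prop) : mu setT = 0 -> \forall x \ae mu, P x.
Proof. by move=> m0; exists setT; split. Qed.

Lemma ae_le_Linf (g : T -> R) :
  \forall x \ae mu, ((`|g x|)%:E <= 'N[mu]_(+oo%E)[EFin \o g])%E.
Proof.
rewrite unlock /=; case: ifPn => [m0|].
  by apply: filterS (ess_sup_ge mu (abse \o (EFin \o g))) => x.
rewrite ltNge => /negbNE m0; apply: ae_null.
by apply/eqP; rewrite eq_le m0 measure_ge0.
Qed.

Lemma negpart_le_Linf (g : T -> R) (S : set T) : measurable S ->
  measurable_fun setT g ->
  (\int[mu]_x (`|g x| * \1_S x)%:E <= 'N[mu]_(+oo%E)[EFin \o g] * mu S)%E.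
Proof.
move=> mS mg.
have mgS : measurable_fun setT (fun x => `|g x| * \1_S x).
  apply: measurable_funM; first exact: measurableT_comp.
  exact/measurable_indic.
have -> : (mu S = \int[mu]_x (\1_S x : R)%:E)%E by rewrite integral_indic // setIT.
rewrite -ge0_integralZl //; first last.
- exact: Lnorm_ge0.
- apply/measurable_EFinP; exact/measurable_indic.
apply: ae_ge0_le_integral => //.
- exact/measurable_EFinP.
- by move=> x _; rewrite mule_ge0 // ?Lnorm_ge0 // lee_fin.
- apply: emeasurable_funM => //; apply/measurable_EFinP; exact/measurable_indic.
apply: filterS (ae_le_Linf g) => x hx _.
rewrite indicE; case: (_ \in _).
  by rewrite mulr1 mule1.
by rewrite mulr0 mule0.
Qed.

Lemma interp_Lq (g : T -> R) (n q : R) : 1 < q -> measurable_fun setT g ->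
  (\forall x \ae mu, `|g x| <= n) ->
  (\int[mu]_x (`|g x| `^ q)%:E <= (n `^ (q - 1))%:E * \int[mu]_x (`|g x|)%:E)%E.
Proof.
move=> q1 mg hn.
rewrite -ge0_integralZl //; last by rewrite lee_fin powR_ge0.
- apply: ae_ge0_le_integral => //.
  + apply/measurable_EFinP.
    apply: (@measurableT_comp _ _ _ _ _ _ (@powR R ^~ q)) => //.
    exact: measurableT_comp.
  + by move=> x _; rewrite lee_fin mulr_ge0 // powR_ge0.
  + apply/measurable_EFinP; apply: measurable_funM => //.
    exact: measurableT_comp.
  apply: filterS hn => x hx _.
  rewrite -EFinM lee_fin -mulr_powRB1 //; last lra.
  rewrite mulrC ler_wpM2r //.
  rewrite ge0_ler_powR //; try lra.
  by rewrite nnegrE (le_trans _ hx).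
- exact/measurable_EFinP/measurableT_comp.
Qed.

Lemma hoelder_ind (f : T -> R) (S : set T) (p : R) : 1 < p -> measurable S ->
  measurable_fun setT f ->
  (\int[mu]_x (`|f x| * \1_S x)%:E <=
     'N[mu]_(p%:E)[EFin \o f] * (mu S) `^ ((p / (p - 1))^-1))%E.
Proof.
move=> p1 mS mf.
have mI : measurable_fun setT (\1_S : T -> R) by exact/measurable_indic.
have := hoelder mu mf mI (_ : 0 < p) (_ : 0 < p / (p - 1)) (_ : p^-1 + (p / (p - 1))^-1 = 1).
have -> : ('N[mu]_1[EFin \o (f \* \1_S)%R] = \int[mu]_x (`|f x| * \1_S x)%:E)%E.
  rewrite Lnorm1; apply: eq_integral => x _ /=.
  by rewrite normrM [`|\1_S x|]ger0_norm.
have -> : ('N[mu]_((p / (p - 1))%:E)[EFin \o \1_S] = (mu S) `^ ((p / (p - 1))^-1))%E.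
  rewrite unlock /=; congr poweR.
  have -> : (mu S = \int[mu]_x (\1_S x : R)%:E)%E by rewrite integral_indic // setIT.
  apply: eq_integral => x _; rewrite indicE.
  case: (_ \in _); first by rewrite normr1 powR1.
  by rewrite normr0 powR0 // gt_eqF // divr_gt0 //; lra.
apply; [lra| rewrite divr_gt0 //; lra|].
rewrite invf_div; field; lra.
Qed.
Lemma Lnorm_finE (g : T -> R) (r : R) :
  ('N[mu]_(r%:E)[EFin \o g] = (\int[mu]_x (`|g x| `^ r)%:E) `^ r^-1)%E.
Proof. by rewrite unlock. Qed.

Lemma Lnorm1E (g : T -> R) :
  ('N[mu]_(1%:E)[EFin \o g] = \int[mu]_x (`|g x|)%:E)%E.
Proof. by rewrite Lnorm1. Qed.
End helpers.
Lemma final_log (R : realType) (q la lb lc l2 lK lB : R) : 1 < q -> 0 <= l2 ->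
  0 <= lb + lc ->
  0 <= q * (la + l2 + lc + lK) + l2 + lB ->
  - la + (- (q / (q - 1) / q)) * lb + (- (q / (q - 1))) * (l2 + lc) <= lK + q^-1 * lB.
Proof.
move=> q1 l20 hbc hs.
set r := q / (q - 1).
have q0 : 0 < q by lra.
have hr : r / q - r = -1 by rewrite /r; field; lra.
have hr0 : 0 <= r / q by rewrite /r; apply: divr_ge0; [apply: divr_ge0|]; lra.
have h1 : - (r / q) * lb <= r / q * lc.
  by rewrite mulNr lerNl -mulrN ler_wpM2l //; lra.
have h2 : (1 + q^-1) * l2 <= r * l2.
  rewrite ler_wpM2r // /r.
  rewrite -subr_ge0 (_ : q / (q - 1) - (1 + q^-1) = (q * (q - 1))^-1); last by field; lra.
  by rewrite invr_ge0 mulr_ge0 //; lra.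
have h3 : - (la + lc + lK) <= (1 + q^-1) * l2 + q^-1 * lB.
  have : 0 <= (la + l2 + lc + lK) + q^-1 * (l2 + lB).
    have -> : (la + l2 + lc + lK) + q^-1 * (l2 + lB) = q^-1 * (q * (la + l2 + lc + lK) + l2 + lB).
      by field; lra.
    by rewrite mulr_ge0 // invr_ge0; lra.
  rewrite mulrDl mulrDr mul1r; lra.
have e : - (r / q) * lb + r / q * lc - r * lc = - (r / q) * lb - lc.
  by rewrite -addrA -mulrBl hr; ring.
have : - la + - (r / q) * lb + - r * (l2 + lc) = - la + (- (r / q) * lb + r / q * lc - r * lc) - r / q * lc - r * l2.
  ring.
move=> ->; rewrite e.
have : - (r / q) * lb - r / q * lc <= 0.
  have -> : - (r / q) * lb - r / q * lc = - (r / q * (lb + lc)) by ring.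
  by rewrite oppr_le0 mulr_ge0.
lra.
Qed.

Lemma lnM' (R : realType) (x y : R) : 0 < x -> 0 < y -> ln (x * y) = ln x + ln y.
Proof. by move=> x0 y0; apply: lnM; rewrite ?inE /= ?posrE. Qed.

Lemma lnV' (R : realType) (x : R) : 0 < x -> ln (x^-1) = - ln x.
Proof. by move=> x0; apply: lnV; rewrite ?inE /= ?posrE. Qed.

Lemma ler_ln' (R : realType) (x y : R) : 0 < x -> 0 < y -> (ln x <= ln y) = (x <= y).
Proof. by move=> x0 y0; apply: ler_ln; rewrite ?inE /= ?posrE. Qed.

Lemma final_real (R : realType) (a b c n m1 P Q iq G K B q : R) :
  1 < q -> 0 < a -> 0 < b -> 0 < c -> 0 < K -> 0 < B -> 0 <= n -> 0 <= G ->
  n <= a * m1 -> m1 <= 2 * (P * K) -> P <= c * Q -> Q <= b * P ->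
  iq <= n `^ (q - 1) * G -> G <= 2 * (n * B) -> Q = iq `^ q^-1 -> 0 < Q ->
  0 <= iq ->
  a^-1 * b `^ (- (q / (q - 1) / q)) * (2 * c) `^ (- (q / (q - 1))) <= K * B `^ q^-1.
Proof.
move=> q1 a0 b0 c0 K0 B0 n0 G0 h1 h2 h3 h4 h5 h6 hQ Q0 iq0.
have q0 : 0 < q by lra.
have iqE : iq = Q `^ q.
  by rewrite hQ -powRrM mulVf ?gt_eqF // powRr1.
have iqp : 0 < iq by rewrite iqE powR_gt0.
have np : 0 < n.
  rewrite lt_neqAle n0 andbT; apply/eqP => n00.
  move: h5; rewrite -n00 powR0 ?mul0r; last by rewrite subr_eq0 gt_eqF.
  by rewrite leNgt iqp.
have Gp : 0 < G.
  rewrite lt_neqAle G0 andbT; apply/eqP => G00.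
  by move: h5; rewrite -G00 mulr0 leNgt iqp.
have m1p : 0 < m1.
  by rewrite -(pmulr_rgt0 _ a0) (lt_le_trans np h1).
have Pp : 0 < P.
  by rewrite -(pmulr_rgt0 _ b0) (lt_le_trans Q0 h4).
have hln x y : 0 < x -> 0 < y -> x <= y -> ln x <= ln y.
  by move=> x0 y0 xy; rewrite ler_ln'.
have l1 : ln n <= ln a + ln m1.
  by rewrite -lnM' // hln // mulr_gt0.
have l2 : ln m1 <= ln 2 + (ln P + ln K).
  by rewrite -!lnM' ?mulr_gt0 // hln // !mulr_gt0.
have l3 : ln P <= ln c + ln Q.
  by rewrite -lnM' // hln // mulr_gt0.
have l4 : ln Q <= ln b + ln P.
  by rewrite -lnM' // hln // mulr_gt0.
have l5 : ln iq <= (q - 1) * ln n + ln G.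
  by rewrite -ln_powR -lnM' ?powR_gt0 // hln // mulr_gt0 // powR_gt0.
have l6 : ln G <= ln 2 + (ln n + ln B).
  by rewrite -!lnM' ?mulr_gt0 // hln // !mulr_gt0.
have l7 : ln iq = q * ln Q by rewrite iqE ln_powR.
have l20 : 0 <= ln (2:R) by rewrite ln_ge0 //; lra.
rewrite -ler_ln'; last 2 first.
- by rewrite !mulr_gt0 ?invr_gt0 ?powR_gt0 // mulr_gt0.
- by rewrite mulr_gt0 ?powR_gt0.
rewrite !lnM' ?invr_gt0 ?powR_gt0 ?mulr_gt0 //.
rewrite lnV' // !ln_powR lnM' //.
apply: final_log => //.
- lra.
- have : q * ln Q <= q * (ln a + ln 2 + ln c + ln Q + ln K) + ln 2 + ln B.
    rewrite -l7.
    have : ln n <= ln a + ln 2 + ln c + ln Q + ln K by lra.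
    move/(ler_wpM2l (ltW q0)) => hq.
    have : (q - 1) * ln n + ln n = q * ln n by ring.
    lra.
  have -> : q * (ln a + ln 2 + ln c + ln Q + ln K) = q * (ln a + ln 2 + ln c + ln K) + q * ln Q by ring.
  lra.
- by rewrite invr_gt0.
- by rewrite powR_gt0.
Qed.

Unset Implicit Arguments.
Local Open Scope classical_set_scope.
Local Open Scope ring_scope.

Theorem mainTheorem1 (R : realType)
  (d1 : measure_display) (X : measurableType d1) (mu : {measure set X -> \bar R})
  (d2 : measure_display) (Y : measurableType d2) (nu : {measure set Y -> \bar R})
  (F : set ((X -> R) * (Y -> R)))
  (HF1 : forall fg, F fg ->
     mu.-integrable setT (EFin \o fg.1) /\ nu.-integrable setT (EFin \o fg.2))
  (p q a b c : R) (hp : 1 < p) (hq : 1 < q) (ha : 0 < a) (hb : 0 < b) (hc : 0 < c)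
  (Hi : forall fg, F fg ->
     ('N[nu]_(+oo%E)[EFin \o fg.2] <= a%:E * 'N[mu]_(1%:E)[EFin \o fg.1])%E)
  (Hii : forall fg, F fg ->
     ('N[nu]_(q%:E)[EFin \o fg.2] <= b%:E * 'N[mu]_(p%:E)[EFin \o fg.1])%E)
  (Hiii : forall fg, F fg ->
     ('N[mu]_(p%:E)[EFin \o fg.1] <= c%:E * 'N[nu]_(q%:E)[EFin \o fg.2])%E)
  (Hiv : forall fg, F fg ->
     (\int[mu]_x (fg.1 x)%:E <= 0)%E /\ (\int[nu]_y (fg.2 y)%:E <= 0)%E) :
  forall fg, F fg ->
    ~ ((\forall x \ae mu, fg.1 x = 0) /\ (\forall y \ae nu, fg.2 y = 0)) ->
    let p' := p / (p - 1) in
    let q' := q / (q - 1) in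
    ((a^-1 * b `^ (- (q' / q)) * (2 * c) `^ (- q'))%:E <=
      (mu [set x | (fg.1 x < 0)%R]) `^ (p'^-1) * (nu [set y | (fg.2 y < 0)%R]) `^ (q^-1))%E.
Proof.
move=> fg Ffg H; cbv zeta.
have [intf intg] := HF1 fg Ffg.
have hi := Hi fg Ffg; have hii := Hii fg Ffg; have hiii := Hiii fg Ffg.
have [hivf hivg] := Hiv fg Ffg.
move: H intf intg hi hii hiii hivf hivg; case: fg {Ffg} => f g /=.
move=> H intf intg hi hii hiii hivf hivg.
have mfE : measurable_fun setT (EFin \o f) := measurable_int mu intf.
have mgE : measurable_fun setT (EFin \o g) := measurable_int nu intg.
have mf : measurable_fun setT f by apply/measurable_EFinP.
have mg : measurable_fun setT g by apply/measurable_EFinP.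
set SA := [set x | f x < 0]; set SB := [set y | g y < 0].
have mSA : measurable SA := mset_lt0 mf.
have mSB : measurable SB := mset_lt0 mg.
set N1 := ('N[mu]_(1%:E)[EFin \o f])%E in hi hii hiii *.
set NI := ('N[nu]_(+oo%E)[EFin \o g])%E in hi hii hiii *.
set Np := ('N[mu]_(p%:E)[EFin \o f])%E in hi hii hiii *.
set Nq := ('N[nu]_(q%:E)[EFin \o g])%E in hi hii hiii *.
have q0 : 0 < q by lra.
have p0 : 0 < p by lra.
have N1f0 : N1 = 0%E -> \forall x \ae mu, f x = 0.
  move=> N0; have h : EFin \o f = \0 %[ae mu].
    by apply: (Lnorm_eq0_eq0 mfE _ N0); rewrite lte_fin.
  by apply: filterS h => x /(_ I) [].
have Npf0 : Np = 0%E -> \forall x \ae mu, f x = 0.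
  move=> N0; have h : EFin \o f = \0 %[ae mu].
    by apply: (Lnorm_eq0_eq0 mfE _ N0); rewrite lte_fin.
  by apply: filterS h => x /(_ I) [].
have Nqf0 : Nq = 0%E -> \forall x \ae mu, f x = 0.
  move=> Nq0; apply: Npf0; apply/eqP; rewrite eq_le Lnorm_ge0 andbT.
  by rewrite (le_trans hiii) // Nq0 mule0.
have f0g0 : (\forall x \ae mu, f x = 0) -> \forall y \ae nu, g y = 0.
  move=> f0.
  have N10 : N1 = 0%E.
    rewrite /N1 Lnorm1; apply/(ae_eq_integral_abs mu measurableT mfE).
    by apply: filterS f0 => x fx _; rewrite /= fx.
  have NI0 : NI = 0%E.
    by apply/eqP; rewrite eq_le Lnorm_ge0 andbT (le_trans hi) // N10 mule0.
  have h : EFin \o g = \0 %[ae nu].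
    by apply: (Lnorm_eq0_eq0 mgE _ NI0).
  by apply: filterS h => x /(_ I) [].
have g0f0 : (\forall y \ae nu, g y = 0) -> \forall x \ae mu, f x = 0.
  move=> g0; apply: Nqf0.
  rewrite /Nq Lnorm_finE.
  have -> : (\int[nu]_x (`|g x| `^ q)%:E = 0)%E.
    apply/eqP; rewrite eq_le; apply/andP; split; last first.
      by apply: integral_ge0 => y _; rewrite lee_fin powR_ge0.
    apply: (le_trans (interp_Lq nu 0 q hq mg _)).
      by apply: filterS g0 => y ->; rewrite normr0.
    by rewrite powR0 ?mul0e // subr_eq0 gt_eqF.
  by rewrite poweR0r // invr_neq0 // gt_eqF.
have nf0 : ~ \forall x \ae mu, f x = 0.
  by move=> f0; apply: H; split => //; exact: f0g0.
have ng0 : ~ \forall y \ae nu, g y = 0.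
  by move=> g0; apply: H; split => //; exact: g0f0.
have hA : (\int[mu]_x (`|f x|)%:E <= 2%:E * \int[mu]_x (`|f x| * \1_SA x)%:E)%E
  := abs_le_negpart mu intf hivf.
have hB : (\int[nu]_x (`|g x|)%:E <= 2%:E * \int[nu]_x (`|g x| * \1_SB x)%:E)%E
  := abs_le_negpart nu intg hivg.
have hA2 : (\int[mu]_x (`|f x| * \1_SA x)%:E <= Np * (mu SA) `^ ((p / (p - 1))^-1))%E
  := hoelder_ind mu SA p hp mSA mf.
have hB2 : (\int[nu]_x (`|g x| * \1_SB x)%:E <= NI * nu SB)%E
  := negpart_le_Linf nu SB mSB mg.
have hN1 : N1 = (\int[mu]_x (`|f x|)%:E)%E := Lnorm1E mu f.
have hG1 : ('N[nu]_(1%:E)[EFin \o g] = \int[nu]_x (`|g x|)%:E)%E := Lnorm1E nu g.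
have sp0 : (p / (p - 1))^-1 != 0 by rewrite invr_neq0 // gt_eqF // divr_gt0 //; lra.
have sq0 : q^-1 != 0 by rewrite invr_neq0 // gt_eqF.
have IA0 : (0 <= \int[mu]_x (`|f x| * \1_SA x)%:E)%E.
  by apply: integral_ge0 => x _; rewrite lee_fin mulr_ge0.
have IB0 : (0 <= \int[nu]_x (`|g x| * \1_SB x)%:E)%E.
  by apply: integral_ge0 => x _; rewrite lee_fin mulr_ge0.
have A0 : (0 < mu SA)%E.
  rewrite lt0e measure_ge0 andbT; apply/eqP => A0; apply: nf0; apply: N1f0.
  have I0 : (\int[mu]_x (`|f x| * \1_SA x)%:E = 0)%E.
    apply/eqP; rewrite eq_le IA0 andbT (le_trans hA2) //.
    by rewrite A0 poweR0r // mule0.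
  apply/eqP; rewrite eq_le Lnorm_ge0 andbT hN1 (le_trans hA) //.
  by rewrite I0 mule0.
have B0 : (0 < nu SB)%E.
  rewrite lt0e measure_ge0 andbT; apply/eqP => B0; apply: ng0.
  have I0 : (\int[nu]_x (`|g x| * \1_SB x)%:E = 0)%E.
    apply/eqP; rewrite eq_le IB0 andbT (le_trans hB2) //.
    by rewrite B0 mule0.
  have N0 : ('N[nu]_(1%:E)[EFin \o g] = 0)%E.
    apply/eqP; rewrite eq_le Lnorm_ge0 andbT hG1 (le_trans hB) //.
    by rewrite I0 mule0.
  have h : EFin \o g = \0 %[ae nu].
    by apply: (Lnorm_eq0_eq0 mgE _ N0); rewrite lte_fin.
  by apply: filterS h => x /(_ I) [].
have [Ainf|Afin] := eqVneq (mu SA) +oo%E.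
  by rewrite Ainf poweRyr // gt0_mulye ?leey // poweR_gt0.
have [Binf|Bfin] := eqVneq (nu SB) +oo%E.
  by rewrite Binf poweRyr // gt0_muley ?leey // poweR_gt0.
have Afn : mu SA \is a fin_num by rewrite ge0_fin_numE ?measure_ge0 // ltey.
have Bfn : nu SB \is a fin_num by rewrite ge0_fin_numE ?measure_ge0 // ltey.
have [al Aal] : exists al, mu SA = al%:E by exists (fine (mu SA)); rewrite fineK.
have [be Bbe] : exists be, nu SB = be%:E by exists (fine (nu SB)); rewrite fineK.
have al0 : 0 < al by rewrite -lte_fin -Aal.
have be0 : 0 < be by rewrite -lte_fin -Bbe.
move/integrableP: (intf) => [_ ifin].
move/integrableP: (intg) => [_ igfin].
have [m1 N1m] : exists m1, N1 = m1%:E.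
  exists (fine N1); rewrite fineK // ge0_fin_numE ?Lnorm_ge0 //.
  by rewrite hN1; exact: ifin.
have [G IG] : exists G, (\int[nu]_x (`|g x|)%:E = G%:E)%E.
  exists (fine (\int[nu]_x (`|g x|)%:E)%E); rewrite fineK // ge0_fin_numE //.
  by apply: integral_ge0 => x _; rewrite lee_fin.
have [n NIn] : exists n, NI = n%:E.
  exists (fine NI); rewrite fineK // ge0_fin_numE ?Lnorm_ge0 //.
  by rewrite (le_lt_trans hi) // N1m -EFinM ltry.
have n0 : 0 <= n by rewrite -lee_fin -NIn Lnorm_ge0.
have G0 : 0 <= G by rewrite -lee_fin -IG; apply: integral_ge0 => x _; rewrite lee_fin.
have hint := interp_Lq nu n q hq mg.
have hae : \forall x \ae nu, `|g x| <= n.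
  apply: filterS (ae_le_Linf nu g) => y hy.
  have hy' : ((`|g y|)%:E <= NI)%E := hy.
  by move: hy'; rewrite NIn lee_fin.
move: {hint}(hint hae); rewrite IG => hint.
have Iq0 : (0 <= \int[nu]_x (`|g x| `^ q)%:E)%E.
  by apply: integral_ge0 => x _; rewrite lee_fin powR_ge0.
have [iq Iqq] : exists iq, (\int[nu]_x (`|g x| `^ q)%:E = iq%:E)%E.
  exists (fine (\int[nu]_x (`|g x| `^ q)%:E)%E); rewrite fineK // ge0_fin_numE //.
  by rewrite (le_lt_trans hint) // -EFinM ltry.
have iq0 : 0 <= iq by rewrite -lee_fin -Iqq.
have NqQ : Nq = (iq `^ q^-1)%:E by rewrite /Nq Lnorm_finE Iqq poweR_EFin.
have [P NpP] : exists P, Np = P%:E.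
  exists (fine Np); rewrite fineK // ge0_fin_numE ?Lnorm_ge0 //.
  by rewrite (le_lt_trans hiii) // NqQ -EFinM ltry.
have Q0 : 0 < iq `^ q^-1.
  rewrite lt_neqAle powR_ge0 andbT; apply/eqP => Q0.
  by apply: nf0; apply: Nqf0; rewrite NqQ -Q0.
have two2 : (0 <= (2:R)%:E)%E by rewrite lee_fin.
rewrite Aal Bbe !poweR_EFin -EFinM lee_fin.
apply: (@final_real R a b c n m1 P (iq `^ q^-1) iq G (al `^ ((p / (p - 1))^-1)) be q) => //.
- by rewrite powR_gt0.
- by move: hi; rewrite NIn N1m -EFinM lee_fin.
- have := le_trans hA (lee_wpmul2l two2 hA2).
  by rewrite -hN1 N1m Aal NpP poweR_EFin -!EFinM lee_fin.
- by move: hiii; rewrite NpP NqQ -EFinM lee_fin.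
- by move: hii; rewrite NpP NqQ -EFinM lee_fin.
- by move: hint; rewrite Iqq -EFinM lee_fin.
- have := le_trans hB (lee_wpmul2l two2 hB2).
  by rewrite IG NIn Bbe -!EFinM lee_fin.
Qed.
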